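(* Let $\mathcal R_1,\mathcal R_2\subset\mathcal G$ be finite generating sets of $\mathcal G$. Then the seminorms $u\mapsto\|\nabla_{\mathcal R_1}u\|_2$ and $u\mapsto\|\nabla_{\mathcal R_2}u\|_2$ on $U_{\mathrm{per}}$ are equivalent and their kernel is $U_{\mathrm{trans}}\cap U_{\mathrm{per}}$.
   Context: Euclidean group: $\mathrm E(n)$ consists of pairs $(A|b)$, $A\in\mathrm O(n)$, $b\in\mathbb R^n$, acting by $(A|b)\cdot x=Ax+b$, product $(A_1|b_1)(A_2|b_2)=(A_1A_2|b_1+A_1b_2)$; $\mathrm{rot}(A|b)=A$. Standing setting: $d=d_1+d_2$; $\mathcal S<\mathrm E(d_2)$ is a space group with translation subgroup $\mathcal T_{\mathcal S}$; $A\oplus(B|b)=(\mathrm{diag}(A,B)|(0,b))$; $\mathcal G$ is a discrete subgroup of $\mathrm E(d)$ contained in $\{A\oplus s:A\in\mathrm O(d_1),s\in\mathcal S\}$ projecting onto $\mathcal S$; $\mathcal T\subset\mathcal G$ maps bijectively onto $\mathcal T_{\mathcal S}$. There is $m_0\in\mathbb N$ such that $\mathcal T^N=\{t^N:t\in\mathcal T\}$ is a normal subgroup iff $N\in\mathcal M=m_0\mathbb N$, then isomorphic to $\mathbb Z^{d_2}$ of finite index; $\mathcal C_N$ is a fixed set of representatives of $\mathcal G/\mathcal T^N$. $U_{\mathrm{per}}$: maps $u:\mathcal G\to\mathbb R^d$ that are $\mathcal T^N$-periodic ($u(gt)=u(g)$ for $t\in\mathcal T^N$) for some $N\in\mathcal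 M$. For finite $\mathcal R$, $\nabla_{\mathcal R}u(g)\in(\mathbb R^d)^{\mathcal R}$, $\nabla_{\mathcal R}u(g)(h)=u(gh)-\mathrm{rot}(h)^Tu(g)$, and for $\mathcal T^N$-periodic $u$, $\|\nabla_{\mathcal R}u\|_2=\big(\frac1{|\mathcal C_N|}\sum_{g\in\mathcal C_N}\sum_{h\in\mathcal R}|\nabla_{\mathcal R}u(g)(h)|^2\big)^{1/2}$. $U_{\mathrm{trans}}$: maps $u:\mathcal G\to\mathbb R^d$ with some $a\in\mathbb R^d$ such that $\mathrm{rot}(g)u(g)=a$ for all $g\in\mathcal G$. *)

(* Defs.v *)
From HB Require Import structures.
From mathcomp Require Import all_boot all_order all_algebra.
From mathcomp Require Import reals.
Set Implicit Arguments. Unset Strict Implicit. Unset Printing Implicit Defensive.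
Import Order.TTheory GRing.Theory Num.Theory.
Local Open Scope ring_scope.

Section Euclid.
Variable R : realType.

(* An element (A|b) of E(n), stored as the pair (A, b). *)
Definition iso (n : nat) := ('M[R]_n * 'cV[R]_n)%type.

Definition is_orth n (A : 'M[R]_n) : Prop := A^T *m A = 1%:M.

Definition imul n (g h : iso n) : iso n := (g.1 *m h.1, g.2 + g.1 *m h.2).
Definition iid n : iso n := (1%:M, 0).
Definition iinv n (g : iso n) : iso n := (g.1^T, - (g.1^T *m g.2)).
Definition act n (g : iso n) (x : 'cV[R]_n) : 'cV[R]_n := g.1 *m x + g.2.
Fixpoint ipow n (g : iso n) (N : nat) : iso n :=
  match N with O => iid n | S k => imul (ipow g k) g end.

Definition is_subgroup n (H : iso n -> Prop) : Prop :=
  [/\ (forall g, H g -> is_orth g.1), H (iid n),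
      (forall g h, H g -> H h -> H (imul g h)) &
      (forall g, H g -> H (iinv g))].

(* every point of H is isolated (topology of E(n) as a subspace of M_n x R^n) *)
Definition is_discrete n (H : iso n -> Prop) : Prop :=
  forall g, H g -> exists2 e : R, 0 < e &
    forall h, H h -> (forall i j, `|h.1 i j - g.1 i j| < e) ->
      (forall i, `|h.2 i 0 - g.2 i 0| < e) -> h = g.

(* space group: discrete cocompact subgroup of E(n)
   (cocompact: R^n is covered by closed balls of a fixed radius around the orbit of 0) *)
Definition is_space_group n (S : iso n -> Prop) : Prop :=
  [/\ is_subgroup S, is_discrete S &
      exists2 r : R, 0 < r & forall x : 'cV[R]_n,
        exists s, S s /\ forall i, `|x i 0 - act s 0 i 0| <= r].

Definition translations n (S : iso n -> Prop) : iso n -> Prop :=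
  fun s => S s /\ s.1 = 1%:M.

Definition dsum d1 d2 (A : 'M[R]_d1) (s : iso d2) : iso (d1 + d2) :=
  (block_mx A 0 0 s.1, col_mx 0 s.2).
Definition proj d1 d2 (g : iso (d1 + d2)) : iso d2 := (drsubmx g.1, dsubmx g.2).

Definition Tpow n (T : iso n -> Prop) (N : nat) : iso n -> Prop :=
  fun x => exists2 t, T t & x = ipow t N.

Definition normal_sub n (H G : iso n -> Prop) : Prop :=
  [/\ is_subgroup H, (forall h, H h -> G h) &
      forall g h, G g -> H h -> H (imul (imul g h) (iinv g))].

Definition inM n (G T : iso n -> Prop) (N : nat) : Prop :=
  (0 < N)%N /\ normal_sub (Tpow T N) G.

Definition periodic n (G T : iso n -> Prop) (N : nat) (u : iso n -> 'cV[R]_n) : Prop :=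
  forall g t, G g -> Tpow T N t -> u (imul g t) = u g.

Definition is_reps n (G H : iso n -> Prop) (c : seq (iso n)) : Prop :=
  [/\ uniq c, (forall x, x \in c -> G x) &
      forall g, G g -> exists! c0, c0 \in c /\ H (imul (iinv c0) g)].

Inductive generated n (Rs : seq (iso n)) : iso n -> Prop :=
  | gen_id : generated Rs (iid n)
  | gen_mul : forall x r, generated Rs x -> r \in Rs -> generated Rs (imul x r)
  | gen_mulinv : forall x r, generated Rs x -> r \in Rs -> generated Rs (imul x (iinv r)).

Definition generates n (G : iso n -> Prop) (Rs : seq (iso n)) : Prop :=
  uniq Rs /\ (forall r, r \in Rs -> G r) /\ (forall g, G g -> generated Rs g).

Definition grad n (u : iso n -> 'cV[R]_n) (g h : iso n) : 'cV[R]_n :=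
  u (imul g h) - (h.1)^T *m u g.

Definition sqnorm n (v : 'cV[R]_n) : R := \sum_i v i 0 ^+ 2.

Definition gradnorm n (Rs : seq (iso n)) (c : seq (iso n)) (u : iso n -> 'cV[R]_n) : R :=
  Num.sqrt ((size c)%:R^-1 *
    \sum_(g <- c) \sum_(h <- Rs) sqnorm (grad u g h)).

Definition U_trans n (G : iso n -> Prop) (u : iso n -> 'cV[R]_n) : Prop :=
  exists a : 'cV[R]_n, forall g, G g -> g.1 *m u g = a.

End Euclid.

(* Main.v *)
Require Import Defs.
From HB Require Import structures.
From mathcomp Require Import all_boot all_order all_algebra.
From mathcomp Require Import reals.
From mathcomp Require Import ring lra.
From Stdlib Require Import ClassicalEpsilon.
Set Implicit Arguments. Unset Strict Implicit. Unset Printing Implicit Defensive.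
Import Order.TTheory GRing.Theory Num.Theory.
Local Open Scope ring_scope.

Notation iinv := Defs.iinv.
Section Grp.
Variable R : realType.
Variable n : nat.
Local Notation iso := (prod (matrix R n n) (matrix R n 1)).

Definition orth (g : iso) := is_orth g.1.

Lemma orthC (A : 'M[R]_n) : is_orth A -> A *m A^T = 1%:M.
Proof. by move=> h; apply: mulmx1C. Qed.

Lemma imulA (g h k : iso) : imul (imul g h) k = imul g (imul h k).
Proof. by rewrite /imul /=; congr pair; rewrite ?mulmxA // mulmxDr mulmxA addrA. Qed.

Lemma imul1g (g : iso) : imul (iid R n) g = g.
Proof. by case: g => [a b]; rewrite /imul /iid /= !mul1mx add0r. Qed.

Lemma imulg1 (g : iso) : imul g (iid R n) = g.
Proof. by case: g => [a b];  rewrite /imul /iid /= mulmx1 mulmx0 addr0. Qed.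

Lemma imulgV (g : iso) : orth g -> imul g (iinv g) = iid R n.
Proof.
case: g => [a b];  rewrite /orth /imul /Defs.iinv /iid /= => o.
by rewrite orthC // mulmxN mulmxA orthC // mul1mx subrr.
Qed.

Lemma imulVg (g : iso) : orth g -> imul (iinv g) g = iid R n.
Proof.
case: g => [a b];  rewrite /orth /imul /Defs.iinv /iid /= => o.
by rewrite o addNr.
Qed.

Lemma iinvK (g : iso) : orth g -> iinv (iinv g) = g.
Proof.
case: g => [a b];  rewrite /orth /Defs.iinv /= => o.
by rewrite trmxK mulmxN opprK mulmxA orthC // mul1mx.
Qed.

Lemma orth_mul (g h : iso) : orth g -> orth h -> orth (imul g h).
Proof.
rewrite /orth /is_orth /= => og oh.
by rewrite trmx_mul mulmxA -(mulmxA h.1^T) og mulmx1 oh.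
Qed.

Lemma orth_inv (g : iso) : orth g -> orth (iinv g).
Proof. by rewrite /orth /is_orth /= trmxK => o; apply: orthC. Qed.

Lemma iinvM (g h : iso) : orth g -> iinv (imul g h) = imul (iinv h) (iinv g).
Proof.
case: g => [a b];  case: h => [c e];  rewrite /orth /imul /Defs.iinv /= => o.
congr pair; first by rewrite trmx_mul.
rewrite trmx_mul mulmxDr -(mulmxA c^T a^T (a *m e)) (mulmxA a^T) o mul1mx.
by rewrite mulmxN opprD addrC mulmxA.
Qed.

Lemma imulKV (d x : iso) : orth d -> imul (iinv d) (imul d x) = x.
Proof. by move=> o; rewrite -imulA imulVg // imul1g. Qed.

Lemma imulVK (d x : iso) : orth d -> imul d (imul (iinv d) x) = x.
Proof. by move=> o; rewrite -imulA imulgV // imul1g. Qed.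


Lemma sqnormE (v : 'cV[R]_n) : sqnorm v = (v^T *m v) 0 0.
Proof. by rewrite /sqnorm !mxE; apply: eq_bigr => i _; rewrite !mxE expr2. Qed.

Lemma sqnorm_ge0 (v : 'cV[R]_n) : 0 <= sqnorm v.
Proof. by apply: sumr_ge0 => i _; apply: sqr_ge0. Qed.

Lemma sqnormN (v : 'cV[R]_n) : sqnorm (- v) = sqnorm v.
Proof. by rewrite /sqnorm; apply: eq_bigr => i _; rewrite mxE sqrrN. Qed.

Lemma sqnormD2 (a b : 'cV[R]_n) : sqnorm (a + b) <= 2 * sqnorm a + 2 * sqnorm b.
Proof.
rewrite /sqnorm !mulr_sumr -big_split /=; apply: ler_sum => i _; rewrite mxE.
have := sqr_ge0 (a i 0 - b i 0); nra.
Qed.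

Lemma sqnorm_eq0 (v : 'cV[R]_n) : sqnorm v <= 0 -> v = 0.
Proof.
move=> h; have h0 : sqnorm v = 0 by apply/eqP; rewrite eq_le h sqnorm_ge0.
move: h0; rewrite /sqnorm => h0.
have h1 := psumr_eq0P (fun k _ => sqr_ge0 (v k 0)) h0.
apply/matrixP => i j; rewrite (ord1 j) mxE.
by apply/eqP; rewrite -sqrf_eq0; apply/eqP; apply: h1.
Qed.

Lemma sqnorm_orth (Q : 'M[R]_n) (v : 'cV[R]_n) : is_orth Q -> sqnorm (Q *m v) = sqnorm v.
Proof.
by move=> o; rewrite !sqnormE trmx_mul mulmxA -(mulmxA v^T) o mulmx1.
Qed.

Definition vv (u : iso -> 'cV[R]_n) (g : iso) := g.1 *m u g.

Lemma grad_vv u (g h : iso) : orth g -> orth h ->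
  sqnorm (vv u (imul g h) - vv u g) = sqnorm (grad u g h).
Proof.
move=> og oh; rewrite /vv /grad.
have -> : g.1 *m u g = (imul g h).1 *m (h.1^T *m u g).
  by rewrite /= mulmxA -(mulmxA g.1) orthC // mulmx1.
by rewrite -mulmxBr sqnorm_orth //; apply: orth_mul.
Qed.

End Grp.

Section Cosets.
Variable R : realType.
Variable n : nat.
Local Notation iso := (prod (matrix R n n) (matrix R n 1)).
Variables (G H : iso -> Prop) (C : seq iso).
Hypothesis HG : is_subgroup G.
Hypothesis HH : normal_sub H G.
Hypothesis HC : is_reps G H C.

Lemma G_orth g : G g -> orth g.
Proof. by case: HG => hh _ _ _; apply: hh. Qed.

Lemma H_G t : H t -> G t.
Proof. by case: HH => _ hh _; apply: hh. Qed.

Lemma GM g h : G g -> G h -> G (imul g h).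
Proof. by case: HG => _ _ hh _; apply: hh. Qed.

Lemma GV g : G g -> G (iinv g).
Proof. by case: HG => _ _ _ hh; apply: hh. Qed.

Lemma HM g h : H g -> H h -> H (imul g h).
Proof. by case: HH => [[_ _ hh _]] _ _; apply: hh. Qed.

Lemma HV g : H g -> H (iinv g).
Proof. by case: HH => [[_ _ _ hh]] _ _; apply: hh. Qed.

Lemma H1 : H (iid R n).
Proof. by case: HH => [[_ hh _ _]] _ _. Qed.

Lemma Hnorm g h : G g -> H h -> H (imul (imul g h) (iinv g)).
Proof. by case: HH => _ _ hn; apply: hn. Qed.

Lemma grad_inv (u : iso -> 'cV[R]_n) :
  (forall g t, G g -> H t -> u (imul g t) = u g) ->
  forall g t h, G g -> H t -> G h -> grad u (imul g t) h = grad u g h.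
Proof.
move=> hp g t h Gg Ht Gh; rewrite /grad (hp g t) //.
have t'H := Hnorm (GV Gh) Ht.
rewrite iinvK in t'H; last exact: G_orth.
have -> : imul (imul g t) h = imul (imul g h) (imul (imul (iinv h) t) h).
  by rewrite !imulA imulVK //; apply: G_orth.
by rewrite hp //; apply: GM.
Qed.

Definition rep (g : iso) : iso :=
  epsilon (inhabits g) (fun c0 => c0 \in C /\ H (imul (iinv c0) g)).

Lemma repP g : G g -> rep g \in C /\ H (imul (iinv (rep g)) g).
Proof.
move=> Gg; rewrite /rep; apply: (epsilon_spec (inhabits g) (fun c0 => c0 \in C /\ H (imul (iinv c0) g))).
case: HC => _ _ /(_ g Gg) [c0 [P _]]; by exists c0.
Qed.

Lemma C_G c : c \in C -> G c.
Proof. by case: HC => _ hh _; apply: hh. Qed.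

Lemma sum_shift (F : iso -> R) w : G w ->
  (forall g t, G g -> H t -> F (imul g t) = F g) ->
  \sum_(c <- C) F (imul c w) = \sum_(c <- C) F c.
Proof.
move=> Gw Finv.
pose f c := rep (imul c w).
have fP c : c \in C -> f c \in C /\ H (imul (iinv (f c)) (imul c w)).
  by move=> cC; apply: repP; apply: GM => //; apply: C_G.
have feq c : c \in C -> F (imul c w) = F (f c).
  move=> cC; have [fC Ht] := fP c cC.
  have -> : imul c w = imul (f c) (imul (iinv (f c)) (imul c w)).
    by rewrite imulVK //; apply: G_orth; apply: C_G.
  by rewrite Finv //; apply: C_G.
rewrite (eq_big_seq (fun c => F (f c))); last by move=> c cC; apply: feq.
rewrite -(big_map f xpredT F); apply: perm_big.
have inj : {in C &, injective f}.
  move=> c1 c2 c1C c2C e.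
  have [f1C t1H] := fP c1 c1C; have [f2C t2H] := fP c2 c2C.
  rewrite e in t1H.
  move: t1H t2H; set d := f c2 => t1H t2H.
  set t1 := imul (iinv d) (imul c1 w) in t1H.
  set t2 := imul (iinv d) (imul c2 w) in t2H.
  have od : orth d by apply: G_orth; apply: C_G.
  have ow : orth w by apply: G_orth.
  have E1 : c1 = imul (imul d t1) (iinv w).
    by rewrite /t1 imulVK // imulA imulgV // imulg1.
  have E2 : c2 = imul (imul d t2) (iinv w).
    by rewrite /t2 imulVK // imulA imulgV // imulg1.
  have ot1 : orth t1 by apply: G_orth; apply: H_G.
  have key : H (imul (iinv c1) c2).
    have -> : imul (iinv c1) c2 = imul (imul w (imul (iinv t1) t2)) (iinv w).
      have odt : orth (imul d t1) by apply: orth_mul.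
      rewrite {1}E1 {1}E2 iinvM // iinvK // iinvM //.
      by rewrite !imulA imulKV.
    by apply: Hnorm => //; apply: HM => //; apply: HV.
  case: HC => _ _ /(_ c2 (C_G c2C)) [c0 [_ uq]].
  have h1 := uq c1 (conj c1C key).
  have k2 : H (imul (iinv c2) c2).
    by rewrite imulVg; [exact: H1 | apply: G_orth; apply: C_G].
  have h2 := uq c2 (conj c2C k2).
  by rewrite -h1 -h2.
have um : uniq (map f C) by rewrite map_inj_in_uniq //; case: HC.
have sub : {subset map f C <= C} by move=> y /mapP [c cC ->]; exact: (fP c cC).1.
have sz : (size C <= size (map f C))%N by rewrite size_map.
have [_ eqs] := uniq_min_size um sub sz.
by apply: uniq_perm => //; case: HC.
Qed.

End Cosets.

Lemma le_sum_mem (R : realType) (T : eqType) (s : seq T) (F : T -> R) x :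
  (forall y, 0 <= F y) -> x \in s -> F x <= \sum_(y <- s) F y.
Proof.
move=> F0; elim: s => //= a s IH; rewrite in_cons big_cons => /orP [/eqP -> | xs].
  by rewrite lerDl sumr_ge0.
by apply: ler_wpDl => //; apply: IH.
Qed.

Lemma sqnorm0 (R : realType) n : sqnorm (0 : 'cV[R]_n) = 0.
Proof. by rewrite /sqnorm big1 // => i _; rewrite mxE expr2 mul0r. Qed.

Section Main.
Variable R : realType.
Variable n : nat.
Local Notation iso := (prod (matrix R n n) (matrix R n 1)).
Variables (G T : iso -> Prop) (C : nat -> seq iso) (Rs1 : seq iso).
Hypothesis HG : is_subgroup G.
Hypothesis HC : forall N, inM G T N -> is_reps G (Tpow T N) (C N).
Hypothesis HR1 : generates G Rs1.

Definition EE (Rs : seq iso) N (u : iso -> 'cV[R]_n) :=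
  \sum_(c <- C N) \sum_(r <- Rs) sqnorm (grad u c r).

Lemma gen_G x : generated Rs1 x -> G x.
Proof.
case: HR1 => _ [RG _].
elim=> [|y r _ IH rin|y r _ IH rin].
- by case: HG.
- by apply: (GM HG) => //; apply: RG.
- by apply: (GM HG) => //; apply: (GV HG); apply: RG.
Qed.

Lemma term_le N u r w : inM G T N -> periodic G T N u -> r \in Rs1 -> G w ->
  \sum_(c <- C N) sqnorm (grad u (imul c w) r) <= EE Rs1 N u.
Proof.
move=> hN hp rin Gw.
have HH : normal_sub (Tpow T N) G by case: hN.
have Gr : G r by case: HR1 => _ [RG _]; apply: RG.
rewrite (sum_shift HG HH (HC hN) (F := fun g => sqnorm (grad u g r))) //.
  apply: ler_sum => c _; apply: (le_sum_mem (F := fun r => sqnorm (grad u c r))) => //.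
  by move=> y; apply: sqnorm_ge0.
by move=> g t Gg Ht; rewrite (grad_inv HG HH) //.
Qed.

Lemma word x0 : generated Rs1 x0 -> exists K : R, 0 <= K /\
  forall N u, inM G T N -> periodic G T N u ->
   \sum_(c <- C N) sqnorm (vv u (imul c x0) - vv u c) <= K * EE Rs1 N u.
Proof.
move=> gx0; elim: gx0 => [|x r gx [K [K0 IH]] rin|x r gx [K [K0 IH]] rin].
- exists 0; split => // N u hN hp.
  by rewrite mul0r big1_seq // => c _; rewrite imulg1 subrr sqnorm0.
- exists (2 * K + 2); split; first by apply: addr_ge0 => //; apply: mulr_ge0.
  move=> N u hN hp.
  have Gx := gen_G gx.
  have Gr : G r by case: HR1 => _ [RG _]; apply: RG.
  have CG c : c \in C N -> G c by move=> cC; apply: (C_G (HC hN)).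
  apply: (@le_trans _ _ (\sum_(c <- C N) (2 * sqnorm (grad u (imul c x) r) +
                                         2 * sqnorm (vv u (imul c x) - vv u c)))).
    rewrite big_seq [X in _ <= X]big_seq; apply: ler_sum => c cC.
    have -> : vv u (imul c (imul x r)) - vv u c =
      (vv u (imul (imul c x) r) - vv u (imul c x)) + (vv u (imul c x) - vv u c).
      by rewrite imulA addrA subrK.
    rewrite -(grad_vv u (G_orth HG (GM HG (CG c cC) Gx)) (G_orth HG Gr)).
    exact: sqnormD2.
  rewrite big_split /= -!mulr_sumr.
  have h1 := term_le hN hp rin Gx.
  have h2 := IH N u hN hp.
  have E0 : 0 <= EE Rs1 N u.
    by apply: sumr_ge0 => c _; apply: sumr_ge0 => r' _; apply: sqnorm_ge0.
  nra.
- exists (2 * K + 2); split; first by apply: addr_ge0 => //; apply: mulr_ge0.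
  move=> N u hN hp.
  have Gx := gen_G gx.
  have Gr : G r by case: HR1 => _ [RG _]; apply: RG.
  have Gw : G (imul x (iinv r)) by apply: (GM HG) => //; apply: (GV HG).
  have CG c : c \in C N -> G c by move=> cC; apply: (C_G (HC hN)).
  apply: (@le_trans _ _ (\sum_(c <- C N) (2 * sqnorm (grad u (imul c (imul x (iinv r))) r) +
                                         2 * sqnorm (vv u (imul c x) - vv u c)))).
    rewrite big_seq [X in _ <= X]big_seq; apply: ler_sum => c cC.
    have -> : vv u (imul c (imul x (iinv r))) - vv u c =
      - (vv u (imul (imul c (imul x (iinv r))) r) - vv u (imul c (imul x (iinv r))))
       + (vv u (imul c x) - vv u c).
      rewrite !imulA imulVg ?imulg1; last exact: (G_orth HG Gr).
      by rewrite opprB addrA subrK.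
    rewrite -(grad_vv u (G_orth HG (GM HG (CG c cC) Gw)) (G_orth HG Gr)).
    by rewrite -(sqnormN (_ - _)); apply: sqnormD2.
  rewrite big_split /= -!mulr_sumr.
  have h1 := term_le hN hp rin Gw.
  have h2 := IH N u hN hp.
  have E0 : 0 <= EE Rs1 N u.
    by apply: sumr_ge0 => c _; apply: sumr_ge0 => r' _; apply: sqnorm_ge0.
  nra.
Qed.

End Main.

Section Main2.
Variable R : realType.
Variable n : nat.
Local Notation iso := (prod (matrix R n n) (matrix R n 1)).
Variables (G T : iso -> Prop) (C : nat -> seq iso) (Rs1 : seq iso).
Hypothesis HG : is_subgroup G.
Hypothesis HC : forall N, inM G T N -> is_reps G (Tpow T N) (C N).
Hypothesis HR1 : generates G Rs1.

Lemma list_bound (s : seq iso) : (forall r, r \in s -> G r) ->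
  exists K : R, 0 <= K /\ forall N u, inM G T N -> periodic G T N u ->
    EE C s N u <= K * EE C Rs1 N u.
Proof.
elim: s => [|r s IH] sG.
  exists 0; split => // N u _ _; rewrite mul0r /EE big1_seq // => c _.
  by rewrite big_nil.
have Gr : G r by apply: sG; rewrite in_cons eqxx.
have [K1 [K10 h1]] : exists K : R, 0 <= K /\ forall N u, inM G T N -> periodic G T N u ->
   \sum_(c <- C N) sqnorm (vv u (imul c r) - vv u c) <= K * EE C Rs1 N u.
  by apply: (word HG HC HR1); case: HR1 => _ [_ ]; apply.
have [K2 [K20 h2]] : exists K : R, 0 <= K /\ forall N u, inM G T N -> periodic G T N u ->
    EE C s N u <= K * EE C Rs1 N u.
  by apply: IH => y ys; apply: sG; rewrite in_cons ys orbT.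
exists (K1 + K2); split; first by apply: addr_ge0.
move=> N u hN hp.
rewrite /EE.
under eq_bigr do rewrite big_cons.
rewrite big_split /= mulrDl.
apply: lerD; last by apply: h2.
apply: le_trans (h1 N u hN hp).
rewrite big_seq [X in _ <= X]big_seq; apply: ler_sum => c cC.
by rewrite (grad_vv u (G_orth HG (C_G (HC hN) cC)) (G_orth HG Gr)).
Qed.

Lemma kernel N u : inM G T N -> periodic G T N u ->
  (gradnorm Rs1 (C N) u = 0 <-> U_trans G u).
Proof.
move=> hN hp.
have [c0 [c0C _]] : exists c0, c0 \in C N /\ True.
  case: (HC hN) => _ _ /(_ (iid R n)) [].
    by case: HG.
  by move=> c0 [[c0C _] _]; exists c0.
have npos : 0 < (size (C N))%:R^-1 :> R.
  rewrite invr_gt0 ltr0n; by case: (C N) c0C.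
have E0 : 0 <= EE C Rs1 N u.
  by apply: sumr_ge0 => c _; apply: sumr_ge0 => r' _; apply: sqnorm_ge0.
rewrite /gradnorm -/(EE C Rs1 N u); split.
  move=> /eqP; rewrite sqrtr_eq0 pmulr_rle0 // => Ele.
  exists (vv u c0) => g Gg.
  have Gc0 : G c0 by apply: (C_G (HC hN)).
  have Gx : G (imul (iinv c0) g) by apply: (GM HG) => //; apply: (GV HG).
  have [K [K0 hK]] := word HG HC HR1 (proj2 (proj2 HR1) _ Gx).
  have := hK N u hN hp.
  have hle := le_sum_mem (F := fun c => sqnorm (vv u (imul c (imul (iinv c0) g)) - vv u c))
      (fun y => sqnorm_ge0 _) c0C.
  move=> hs.
  have : sqnorm (vv u (imul c0 (imul (iinv c0) g)) - vv u c0) <= 0.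
    apply: le_trans hle (le_trans hs _); exact: mulr_ge0_le0.
  move/sqnorm_eq0/eqP; rewrite subr_eq0 imulVK; last exact: (G_orth HG).
  by move/eqP.
case=> a Ha.
suff -> : EE C Rs1 N u = 0 by rewrite mulr0 sqrtr0.
rewrite /EE big1_seq // => c /andP [_ cC]; rewrite big1_seq // => r /andP [_ rR].
have Gc : G c by apply: (C_G (HC hN)).
have Gr : G r by case: HR1 => _ [RG _]; apply: RG.
rewrite -(grad_vv u (G_orth HG Gc) (G_orth HG Gr)) /vv.
by rewrite !Ha ?subrr ?sqnorm0 //; apply: (GM HG).
Qed.

End Main2.
Theorem theorem4p5 (R : realType) (d1 d2 : nat)
  (S : iso R d2 -> Prop) (G T : iso R (d1 + d2) -> Prop)
  (C : nat -> seq (iso R (d1 + d2)))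
  (Rs1 Rs2 : seq (iso R (d1 + d2)))
  (HS : is_space_group S)
  (HGsub : is_subgroup G) (HGdisc : is_discrete G)
  (HGform : forall g, G g -> exists (A : 'M[R]_d1) (s : iso R d2), [/\ is_orth A, S s & g = dsum A s])
  (HGonto : forall s, S s -> exists2 g, G g & proj g = s)
  (HTG : forall t, T t -> G t)
  (HTinj : forall t t', T t -> T t' -> proj t = proj t' -> t = t')
  (HTonto : forall s, translations S s <-> exists2 t, T t & proj t = s)
  (HC : forall N, inM G T N -> is_reps G (Tpow T N) (C N))
  (HR1 : generates G Rs1) (HR2 : generates G Rs2) :
  (exists c1, exists c2, [/\ 0 < c1, 0 < c2 &
     forall N u, inM G T N -> periodic G T N u ->
       c1 * gradnorm Rs1 (C N) u <= gradnorm Rs2 (C N) u /\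
       gradnorm Rs2 (C N) u <= c2 * gradnorm Rs1 (C N) u])
  /\ (forall N u, inM G T N -> periodic G T N u ->
       (gradnorm Rs1 (C N) u = 0 <-> U_trans G u) /\
       (gradnorm Rs2 (C N) u = 0 <-> U_trans G u)).
Proof.
have HCs := HC.
have bound : forall Ra Rb : seq (iso R (d1 + d2)), generates G Ra -> generates G Rb ->
  exists c : R, 0 < c /\ forall N u, inM G T N -> periodic G T N u ->
    gradnorm Rb (C N) u <= c * gradnorm Ra (C N) u.
  move=> Ra Rb Ha Hb.
  have [K [K0 hK]] := list_bound HGsub HCs Ha (proj1 (proj2 Hb)).
  exists (Num.sqrt K + 1); split; first by apply: ltr_wpDl; [apply: sqrtr_ge0|].
  move=> N u hN hp.
  have g0 : 0 <= gradnorm Ra (C N) u by apply: sqrtr_ge0.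
  apply: (@le_trans _ _ (Num.sqrt K * gradnorm Ra (C N) u)); last first.
    by rewrite mulrDl mul1r lerDl.
  rewrite /gradnorm -sqrtrM // ler_sqrt; last first.
    apply: mulr_ge0 => //; apply: mulr_ge0; first by rewrite invr_ge0 ler0n.
    by apply: sumr_ge0 => c _; apply: sumr_ge0 => r' _; apply: sqnorm_ge0.
  rewrite mulrCA; apply: ler_wpM2l; first by rewrite invr_ge0 ler0n.
  exact: (hK N u hN hp).
split.
  have [a [a0 ha]] := bound Rs2 Rs1 HR2 HR1.
  have [b [b0 hb]] := bound Rs1 Rs2 HR1 HR2.
  exists a^-1, b; split; rewrite ?invr_gt0 // => N u hN hp; split; last exact: hb.
  by rewrite ler_pdivrMl //; apply: ha.
move=> N u hN hp; split.
  exact: (kernel HGsub HCs HR1).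
exact: (kernel HGsub HCs HR2).
Qed.
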